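(* Let $X$ be a nonnegative real-valued random variable and $\Lambda(\lambda)=\log\mathbb E[e^{\lambda X}]$, with Fenchel–Legendre transform $\Lambda^\star(x)=\sup_{\lambda\in\mathbb R}(\lambda x-\Lambda(\lambda))$. Then $$\lim_{\nu\downarrow0}\nu\Lambda^\star(1/\nu)=\sup\{\lambda:\Lambda(\lambda)<\infty\}.$$ *)

(* Defs.v *)
From HB Require Import structures.
From mathcomp Require Import all_boot all_order all_algebra.
From mathcomp Require Import all_classical all_reals all_analysis.
Set Implicit Arguments. Unset Strict Implicit. Unset Printing Implicit Defensive.
Import Order.TTheory GRing.Theory Num.Theory.
Import numFieldNormedType.Exports.
Local Open Scope classical_set_scope.
Local Open Scope ring_scope.

Definition log_mgf d (T : measurableType d) (R : realType)
  (P : probability T R) (X : T -> R) (l : R) : \bar R :=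
  lne (\int[P]_x (expR (l * X x))%:E).

Definition fenchel_legendre (R : realType) (L : R -> \bar R) (x : R) : \bar R :=
  ereal_sup [set ((l * x)%:E - L l)%E | l in [set: R]].

(* Main.v *)
Require Import Defs.
From HB Require Import structures.
From mathcomp Require Import all_boot all_order all_algebra.
From mathcomp Require Import all_classical all_reals all_analysis.
From mathcomp Require Import measurable_realfun.
From mathcomp Require Import ring lra.
Import Order.TTheory GRing.Theory Num.Theory.
Import numFieldNormedType.Exports.
Local Open Scope classical_set_scope.
Local Open Scope ring_scope.

Lemma near_small (R : realType) (K e : R) : 0 < e ->
  \forall nu \near (0:R)^'+, 0 < nu /\ nu * K < e.
Proof.
move=> e0; near=> nu; split; first by near: nu; exact: nbhs_right_gt.
have h : nu < e / (`|K| + 1) by near: nu; apply: nbhs_right_lt; rewrite divr_gt0// ltr_wpDl.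
have n0 : 0 < nu by near: nu; exact: nbhs_right_gt.
rewrite ltr_pdivlMr ?ltr_wpDl// in h.
have : nu * K <= nu * `|K| by apply: ler_wpM2l; [exact: ltW | exact: ler_norm].
lra.
Unshelve. all: by end_near.
Qed.

Section S.
Context d (T : measurableType d) (R : realType) (P : probability T R) (X : {RV P >-> R}).
Local Open Scope ereal_scope.
Lemma mexp (l : R) : measurable_fun [set: T] (fun x => (expR (l * X x)%R)%:E).
Proof.
apply/measurable_EFinP; apply: measurableT_comp => //.
apply: measurable_funM => //.
Qed.
Lemma int_ge1 (l : R) : (0 <= l)%R -> (forall t, 0 <= X t)%R -> 1 <= \int[P]_x (expR (l * X x)%R)%:E.
Proof.
move=> l0 hX.
have -> : (1 : \bar R) = \int[P]_(x in setT) (cst 1%E) x.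
  by rewrite integral_cst// mul1e; exact/esym/(probability_setT P).
apply: (ge0_le_integral P measurableT).
- by move=> x _; rewrite lee_fin.
- exact: measurable_cst.
- exact: mexp.
- move=> x _; rewrite lee_fin -expR0 ler_expR; exact: mulr_ge0 l0 (hX x).
Qed.
Lemma int_le1 (l : R) : (l <= 0)%R -> (forall t, 0 <= X t)%R -> \int[P]_x (expR (l * X x)%R)%:E <= 1.
Proof.
move=> l0 hX.
have -> : (1 : \bar R) = \int[P]_(x in setT) (cst 1%E) x.
  by rewrite integral_cst// mul1e; exact/esym/(probability_setT P).
apply: (ge0_le_integral P measurableT).
- by move=> x _; rewrite lee_fin expR_ge0.
- exact: mexp.
- exact: measurable_cst.
- move=> x _; rewrite lee_fin -expR0 ler_expR; exact: mulr_le0_ge0 l0 (hX x).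
Qed.
Lemma int_lb (l M : R) : (l <= 0)%R ->
  (expR (l * M))%:E * P (X @^-1` `]-oo, M]) <= \int[P]_x (expR (l * X x)%R)%:E.
Proof.
move=> l0.
have mA : measurable (X @^-1` `]-oo, M]).
  by rewrite -[X in measurable X]setTI; apply: measurable_funP => //.
rewrite -integral_cst//.
apply: (@le_trans _ _ (\int[P]_(x in X @^-1` `]-oo, M]) (expR (l * X x)%R)%:E)).
- apply: (ge0_le_integral P mA).
  + by move=> x _; rewrite lee_fin expR_ge0.
  + exact: measurable_cst.
  + exact: measurable_funTS (mexp l).
  + move=> x; rewrite /= in_itv /= => xM; rewrite lee_fin ler_expR.
    exact: ler_wnM2l.
- apply: ge0_subset_integral => //.
  + exact: mexp.
Qed.
End S.

Theorem proposition2p5 (d : measure_display) (T : measurableType d)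
  (R : realType) (P : probability T R) (X : {RV P >-> R})
  (hX : forall t, 0 <= X t) :
  ((nu%:E * fenchel_legendre (log_mgf P X) nu^-1)%E @[nu --> 0^'+] -->
   ereal_sup [set l%:E | l in [set l : R | (log_mgf P X l < +oo)%E]]).
Proof.
set L := log_mgf P X.
set S := ereal_sup _.
have L0 : forall l, 0 <= l -> (0 <= L l)%E.
  by move=> l l0; rewrite /L /log_mgf lne_ge0; exact: (@int_ge1 _ _ _ P X l l0 hX).
have Lfin : forall l, l <= 0 -> (L l < +oo)%E.
  move=> l l0; rewrite /L /log_mgf.
  have h := @int_le1 _ _ _ P X l l0 hX.
  by move: h; case: (\int[P]_x (expR (l * X x)%R)%:E)%E => [r| |] //= _; rewrite /lne; case: ifP => _; rewrite ltey.
have [M PM] : exists M : R, (0 < P (X @^-1` `]-oo, M]))%E.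
  apply: contrapT => /forallNP H.
  have h1 := cvg_cdfy1 X.
  have := cvge_to_le (b := 0%E) h1.
  have H0 : \forall x \near +oo%R, (cdf X x <= 0)%E.
    by near=> x; rewrite leNgt; apply/negP; exact: H x.
  by move=> /(_ _ H0); rewrite lee_fin ler10.
have mA : measurable (X @^-1` `]-oo, M]).
  by rewrite -[X in measurable X]setTI; apply: measurable_funP => //.
pose p := fine (P (X @^-1` `]-oo, M])).
have PA : P (X @^-1` `]-oo, M]) = p%:E by rewrite fineK // fin_num_measure.
have p0 : 0 < p by rewrite -lte_fin -PA.
have p1 : p <= 1 by rewrite -lee_fin -PA; exact: probability_le1.
pose c := - ln p.
have cE : c = - ln p := erefl.
have c0 : 0 <= c by rewrite cE oppr_ge0 ln_le0.
have Llb : forall l, l <= 0 -> ((l * M + ln p)%:E <= L l)%E.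
  move=> l l0; rewrite /L /log_mgf.
  have h := @int_lb _ _ _ P X l M l0; rewrite PA -EFinM in h.
  have -> : (l * M + ln p)%:E = lne (expR (l * M) * p)%:E.
    by rewrite lne_EFin ?mulr_gt0 ?expR_gt0// lnM ?posrE ?expR_gt0 // expRK.
  rewrite lee_lne //; rewrite in_itv /= leey andbT.
    by rewrite lee_fin mulr_ge0 // ?expR_ge0 // ltW.
  by apply: integral_ge0 => x _; rewrite lee_fin expR_ge0.
have Lnoty : forall l, (-oo < L l)%E.
  move=> l; case: (leP 0 l) => l0.
    exact: lt_le_trans (ltNyr 0) (L0 l l0).
  exact: lt_le_trans (ltNyr _) (Llb l (ltW l0)).
have Lfin_of : forall l, (L l < +oo)%E -> exists a, L l = a%:E.
  by move=> l h; exists (fine (L l)); rewrite fineK // fin_numElt Lnoty h.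
have S0 : (0 <= S)%E.
  by apply: ereal_sup_ubound; exists 0 => //; exact: Lfin.
have lowb : forall l a nu, L l = a%:E -> 0 < nu ->
    ((l - nu * a)%:E <= nu%:E * fenchel_legendre L nu^-1)%E.
  move=> l a nu La nu0.
  have h : ((l * nu^-1 - a)%:E <= fenchel_legendre L nu^-1)%E.
    by apply: ereal_sup_ubound; exists l => //; rewrite La EFinB.
  rewrite (_ : (l - nu * a)%:E = (nu%:E * (l * nu^-1 - a)%:E)%E); last first.
    by rewrite -EFinM mulrBr mulrCA mulfV ?gt_eqF // mulr1.
  by apply: lee_wpmul2l => //; rewrite lee_fin ltW.
have upb : forall s nu, S = s%:E -> 0 < nu -> nu * (`|M| + 1) < 1 ->
    (nu%:E * fenchel_legendre L nu^-1 <= (s + nu * c)%:E)%E.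
  move=> s nu Ss nu0 nuM.
  have s0 : 0 <= s by rewrite -lee_fin -Ss.
  have w0 : 0 < nu^-1 by rewrite invr_gt0.
  have wM : M <= nu^-1.
    have : `|M| + 1 < nu^-1 by rewrite -[nu^-1]mul1r ltr_pdivlMr // mulrC.
    have := ler_norm M; lra.
  have FL : (fenchel_legendre L nu^-1 <= (s * nu^-1 + c)%:E)%E.
    apply: ge_ereal_sup => _ [l _ <-].
    case: (leP 0 l) => l0.
    - case: (boolP (L l < +oo)%E) => hl.
      + have [a La] := Lfin_of l hl.
        rewrite La -EFinB lee_fin.
        have a0 : 0 <= a by have := L0 l l0; rewrite La lee_fin.
        have ls : l <= s.
          have : (l%:E <= S)%E by apply: ereal_sup_ubound; exists l.
          by rewrite Ss lee_fin.
        have : l * nu^-1 <= s * nu^-1 by rewrite ler_wpM2r // ltW.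
        lra.
      + move: hl; rewrite -leNgt leye_eq => /eqP ->.
        by rewrite /= leNye.
    - have hl := Lfin l (ltW l0).
      have [a La] := Lfin_of l hl.
      have := Llb l (ltW l0); rewrite La lee_fin => ha.
      rewrite -EFinB lee_fin.
      have h1 : l * (nu^-1 - M) <= 0.
        by apply: mulr_le0_ge0; [exact: ltW | rewrite subr_ge0].
      have h2 : 0 <= s * nu^-1 by apply: mulr_ge0 => //; exact: ltW.
      lra.
  apply: le_trans (lee_wpmul2l _ FL) _; first by rewrite lee_fin ltW.
  by rewrite -EFinM lee_fin mulrDr mulrCA mulfV ?gt_eqF // mulr1.
case Sdef : S => [s| |].
- apply/fine_cvgP; split.
    near=> nu.
    have [nu0 nuM] : 0 < nu /\ nu * (`|M| + 1) < 1 by near: nu; exact: near_small.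
    have [a0 La0] := Lfin_of 0 (Lfin 0 (lexx 0)).
    rewrite fin_numElt; apply/andP; split.
      exact: lt_le_trans (ltNyr _) (lowb _ _ _ La0 nu0).
    exact: le_lt_trans (upb s nu Sdef nu0 nuM) (ltry _).
  apply/cvgrPdist_lt => e e0.
  have : ((s - e / 2)%:E < S)%E by rewrite Sdef lte_fin; lra.
  move/ereal_sup_gt => [_ [l Dl <-]]; rewrite lte_fin => sl.
  have [a La] := Lfin_of l Dl.
  have e20 : 0 < e / 2 by lra.
  near=> nu.
  have [nu0 nuM] : 0 < nu /\ nu * (`|M| + 1) < 1 by near: nu; exact: near_small.
  have [_ nua] : 0 < nu /\ nu * a < e / 2 by near: nu; exact: near_small.
  have [_ nuc] : 0 < nu /\ nu * c < e / 2 by near: nu; exact: near_small.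
  have lo := lowb l a nu La nu0.
  have hi := upb s nu Sdef nu0 nuM.
  have [a0 La0] := Lfin_of 0 (Lfin 0 (lexx 0)).
  have fF : (nu%:E * fenchel_legendre L nu^-1)%E \is a fin_num.
    rewrite fin_numElt; apply/andP; split.
      exact: lt_le_trans (ltNyr _) (lowb _ _ _ La0 nu0).
    exact: le_lt_trans hi (ltry _).
  rewrite -(fineK fF) lee_fin in lo hi.
  rewrite /= ltr_norml; apply/andP; split; rewrite lee_fin in hi; lra.
- apply/cvgeyPge => A.
  have : ((A + 1)%:E < S)%E by rewrite Sdef ltey.
  move/ereal_sup_gt => [_ [l Dl <-]]; rewrite lte_fin => Al.
  have [a La] := Lfin_of l Dl.
  near=> nu; have [nu0 nua] : 0 < nu /\ nu * a < 1 by near: nu; exact: near_small.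
  apply: le_trans (lowb l a nu La nu0); rewrite lee_fin; lra.
- by move: S0; rewrite Sdef.
Unshelve. all: by end_near.
Qed.
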